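(* Let $S\subset\mathbf{P}^4_{\mathbb{Q}}$ be a smooth quadric surface such that the double covering $\pi:O\to\mathbf{P}^4_{\mathbb{Q}}$ splits over $S$, $S$ is tangent to the five coordinate hyperplanes $H_0,\ldots,H_4$, and for each $i$ the point of tangency of $S$ with $H_i$ is contained in one of the three lines on $H_i\cap R$. Write $P^{(0)}=(0:x_1^{(0)}:x_2^{(0)}:x_3^{(0)}:x_4^{(0)})$ for the point of tangency of $S$ with $H_0$. Then $x_1^{(0)},x_2^{(0)},x_3^{(0)},x_4^{(0)}\neq0$.
   Context: Let $\Delta'(x_0,\ldots,x_4):=\prod_{i_1,\ldots,i_4\in\{0,1\}}\big(\sqrt{x_0}+(-1)^{i_1}\sqrt{x_1}+(-1)^{i_2}\sqrt{x_2}+(-1)^{i_3}\sqrt{x_3}+(-1)^{i_4}\sqrt{x_4}\big)\in\mathbb{Q}[x_0,\ldots,x_4]$ (degree $8$). $O$ is the double covering $\pi:O\to\mathbf{P}^4_{\mathbb{Q}}$ given by $w^2=(-3)\Delta'(x_0,\ldots,x_4)$; it splits over $S$ if $(-3)\Delta'$ restricted to $S$ is a square, i.e. $\pi^{-1}(S)\to S$ is a trivial double covering. $R$ is the locus $\Delta'=0$ and $H_i$ the hyperplane $x_i=0$. The three lines on $H_0\cap R$ are $\{(0:r:r:s:s)\}$, $\{(0:r:s:r:s)\}$, $\{(0:r:s:s:r)\}$, and analogously for the other $H_i$. $S$ is tangent to $H_i$ at $P$ if $T_PS\subset H_i$. *)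

(* Defs.v *)
From HB Require Import structures.
From mathcomp Require Import all_boot all_order all_algebra all_field.
From mathcomp Require Import mpoly.
Set Implicit Arguments. Unset Strict Implicit. Unset Printing Implicit Defensive.
Import Order.TTheory GRing.Theory Num.Theory.
Local Open Scope ring_scope.

(* Points of P^4 are represented by nonzero row vectors in algC^5
   (algC = algebraic closure of Q); all conditions below are invariant
   under rescaling. *)
Definition pt := 'rV[algC]_5.
Definition pcoord (x : pt) (i : 'I_5) : algC := x ord0 i.

Definition dotv (u v : pt) : algC := (u *m v^T) ord0 ord0.

Definition sgnb (b : bool) : algC := if b then -1 else 1.
Definition Delta' (x : pt) : algC :=
  \prod_(e : {ffun 'I_4 -> bool})
    (sqrtC (pcoord x ord0) +
     \sum_(k < 4) sgnb (e k) * sqrtC (pcoord x (lift ord0 k))).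

(* A quadric surface S of P^4_Q, given as { l(x) = 0, x A x^T = 0 } with
   l : 'rV[rat]_5 a linear form and A : 'M[rat]_5 a symmetric matrix. *)
Definition lC (l : 'rV[rat]_5) : pt := map_mx ratr l.
Definition AC (A : 'M[rat]_5) : 'M[algC]_5 := map_mx ratr A.

Definition onS (l : 'rV[rat]_5) (A : 'M[rat]_5) (x : pt) : Prop :=
  x != 0 /\ dotv (lC l) x = 0 /\ dotv (x *m AC A) x = 0.

(* S is a smooth quadric surface: l <> 0, A symmetric, and the Jacobian
   criterion holds at every geometric point (l and the gradient x A of the
   quadric are linearly independent). *)
Definition smooth_quadric_surface (l : 'rV[rat]_5) (A : 'M[rat]_5) : Prop :=
  l != 0 /\ A^T = A /\
  forall x : pt, onS l A x -> \rank (col_mx (lC l) (x *m AC A)) = 2%N.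

(* Projective tangent space T_P S (as a linear subspace of algC^5)
   contained in the hyperplane H_i = {x_i = 0}. *)
Definition tangent_at (l : 'rV[rat]_5) (A : 'M[rat]_5) (i : 'I_5) (P : pt)
  : Prop :=
  onS l A P /\
  forall v : pt, dotv (lC l) v = 0 -> dotv (P *m AC A) v = 0 -> pcoord v i = 0.

(* P lies on one of the three lines of H_i /\ R : x_i = 0 and the other
   four coordinates split into two pairs of equal coordinates
   (e.g. for i = 0 : (0:r:r:s:s), (0:r:s:r:s), (0:r:s:s:r)). *)
Definition on_three_lines (i : 'I_5) (P : pt) : Prop :=
  pcoord P i = 0 /\
  exists a b c d : 'I_5,
    uniq [:: i; a; b; c; d] /\ pcoord P a = pcoord P b /\ pcoord P c = pcoord P d.

(* The double covering w^2 = (-3) Delta' splits over S: (-3) Delta'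
   restricted to S is the square of a quartic form over Q. *)
Definition splits_over (l : 'rV[rat]_5) (A : 'M[rat]_5) : Prop :=
  exists g : {mpoly rat[5]}, g \is 4.-homog /\
    forall x : pt, onS l A x ->
      (-3) * Delta' x = ((map_mpoly ratr g : {mpoly algC[5]}).@[pcoord x]) ^+ 2.

(* Main.v *)
Require Import Defs.
From HB Require Import structures.
From mathcomp Require Import all_boot all_order all_algebra all_field.
From mathcomp Require Import mpoly.
From mathcomp Require Import ring lra.
Import Order.TTheory GRing.Theory Num.Theory.
Local Open Scope ring_scope.

Definition ev (i : 'I_5) : pt := delta_mx ord0 i.

Lemma evE i k : ev i ord0 k = (i == k)%:R.
Proof. by rewrite /ev mxE eqxx /= eq_sym. Qed.

Lemma dotvE (u v : pt) : dotv u v = \sum_i u ord0 i * v ord0 i.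
Proof. by rewrite /dotv mxE; apply: eq_bigr => i _; rewrite mxE. Qed.

Lemma dotvDr u v w : dotv u (v + w) = dotv u v + dotv u w.
Proof. by rewrite !dotvE -big_split; apply: eq_bigr => i _; rewrite mxE mulrDr. Qed.
Lemma dotvDl u v w : dotv (v + w) u = dotv v u + dotv w u.
Proof. by rewrite !dotvE -big_split; apply: eq_bigr => i _; rewrite mxE mulrDl. Qed.
Lemma dotvZr u a v : dotv u (a *: v) = a * dotv u v.
Proof. by rewrite !dotvE mulr_sumr; apply: eq_bigr => i _; rewrite mxE mulrCA. Qed.
Lemma dotvZl u a v : dotv (a *: v) u = a * dotv v u.
Proof. by rewrite !dotvE mulr_sumr; apply: eq_bigr => i _; rewrite mxE mulrA. Qed.
Lemma dotvNr u v : dotv u (- v) = - dotv u v.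
Proof. by rewrite -scaleN1r dotvZr mulN1r. Qed.
Lemma dotvNl u v : dotv (- v) u = - dotv v u.
Proof. by rewrite -scaleN1r dotvZl mulN1r. Qed.
Lemma dotvBr u v w : dotv u (v - w) = dotv u v - dotv u w.
Proof. by rewrite dotvDr dotvNr. Qed.
Lemma dotvBl u v w : dotv (v - w) u = dotv v u - dotv w u.
Proof. by rewrite dotvDl dotvNl. Qed.
Lemma dotv_e u i : dotv u (ev i) = u ord0 i.
Proof.
rewrite dotvE (bigD1 i) //= evE eqxx mulr1 big1 ?addr0 // => k hk.
by rewrite evE eq_sym (negbTE hk) mulr0.
Qed.

Definition B (M : 'M[algC]_5) (x y : pt) := dotv (x *m M) y.

Lemma BDl M x y z : B M (x + y) z = B M x z + B M y z.
Proof. by rewrite /B mulmxDl dotvDl. Qed.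
Lemma BZl M a x z : B M (a *: x) z = a * B M x z.
Proof. by rewrite /B -scalemxAl dotvZl. Qed.
Lemma BNl M x z : B M (- x) z = - B M x z.
Proof. by rewrite -scaleN1r BZl mulN1r. Qed.
Lemma BBl M x y z : B M (x - y) z = B M x z - B M y z.
Proof. by rewrite BDl BNl. Qed.
Lemma BDr M x y z : B M z (x + y) = B M z x + B M z y.
Proof. by rewrite /B dotvDr. Qed.
Lemma BZr M a x z : B M z (a *: x) = a * B M z x.
Proof. by rewrite /B dotvZr. Qed.
Lemma BNr M x z : B M z (- x) = - B M z x.
Proof. by rewrite /B dotvNr. Qed.
Lemma BBr M x y z : B M z (x - y) = B M z x - B M z y.
Proof. by rewrite /B dotvBr. Qed.

Lemma Bsym M x y : M^T = M -> B M x y = B M y x.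
Proof.
move=> hM; rewrite /B /dotv.
have tr : forall N : 'M[algC]_1, N ord0 ord0 = N^T ord0 ord0 by move=> N; rewrite mxE.
by rewrite [in RHS]tr !trmx_mul trmxK hM mulmxA.
Qed.

Lemma ACsym A : A^T = A -> (Defs.AC A)^T = Defs.AC A.
Proof. by move=> hA; unfold Defs.AC; rewrite map_trmx hA. Qed.

Lemma uniq5_neq (a b c d f : 'I_5) : uniq [:: a; b; c; d; f] ->
  [/\ [/\ (a == b) = false, (a == c) = false, (a == d) = false, (a == f) = false & (b == c) = false],
      [/\ (b == d) = false, (b == f) = false, (c == d) = false, (c == f) = false & (d == f) = false],
      [/\ (b == a) = false, (c == a) = false, (d == a) = false, (f == a) = false & (c == b) = false] &
      [/\ (d == b) = false, (f == b) = false, (d == c) = false, (f == c) = false & (f == d) = false]].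
Proof.
rewrite /= !inE !negb_or => /and5P [/and4P [ab ac ad af] /and3P [bc bd bf] /andP [cd cf] df _].
by do !split; apply/negbTE; first [done | rewrite eq_sym; done].
Qed.

Lemma cover5 (a b c d f : 'I_5) : uniq [:: a; b; c; d; f] ->
  forall k, k = a \/ k = b \/ k = c \/ k = d \/ k = f.
Proof.
move=> hu k.
have : k \in [:: a; b; c; d; f].
  have hs := @uniq_min_size _ [:: a; b; c; d; f] (enum 'I_5) hu.
  rewrite (hs _ _).2 ?mem_enum ?size_enum_ord // => x _; by rewrite mem_enum.
by rewrite !inE => /orP [/eqP ->|/orP [/eqP ->|/orP [/eqP ->|/orP [/eqP ->|/eqP ->]]]]; tauto.
Qed.

Lemma sum5 (a b c d f : 'I_5) (F : 'I_5 -> algC) : uniq [:: a; b; c; d; f] ->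
  \sum_i F i = F a + F b + F c + F d + F f.
Proof.
move=> hu.
rewrite (perm_big [:: a; b; c; d; f]) /=; last first.
  apply: uniq_perm => //; first exact: index_enum_uniq.
  move=> k; rewrite mem_index_enum; by case: (cover5 _ _ _ _ _ hu k) => [->|[->|[->|[->|->]]]]; rewrite !inE eqxx ?orbT.
by rewrite !big_cons big_nil addr0 !addrA.
Qed.

Ltac simpeq := repeat match goal with
 | H : (?a == ?b) = false |- context [?a == ?b] => rewrite H
 end; rewrite ?eqxx.

Lemma tangT l A i P z w : tangent_at l A i P ->
  dotv (lC l) z = 0 -> z ord0 i != 0 -> dotv (lC l) w = 0 -> w ord0 i = 0 ->
  B (Defs.AC A) P w = 0.
Proof.
move=> [_ tP] Lz zi Lw wi.
pose v := B (Defs.AC A) P w *: z - B (Defs.AC A) P z *: w.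
have := tP v.
rewrite /pcoord /v dotvBr !dotvZr Lz Lw !mulr0 subrr => /(_ erefl).
rewrite -/(B _ _ _) BBr !BZr mulrC subrr => /(_ erefl).
rewrite !mxE wi mulr0 subr0 => /eqP; rewrite mulf_eq0 (negbTE zi) orbF => /eqP //.
Qed.

Lemma exists_nz (l : 'rV[rat]_5) : l != 0 -> exists r, l ord0 r != 0.
Proof.
move=> lnz; case: (pickP (fun r => l ord0 r != 0)) => [r hr|h]; first by exists r.
move/eqP: lnz; case; apply/rowP => r; rewrite mxE; by move/negbFE/eqP: (h r).
Qed.

Lemma lCE l i : lC l ord0 i = ratr (l ord0 i).
Proof. by rewrite mxE. Qed.

Lemma rank_le1 l A P : l != 0 ->
  (forall v, dotv (lC l) v = 0 -> B (Defs.AC A) P v = 0) ->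
  (\rank (col_mx (lC l) (P *m Defs.AC A)) <= 1)%N.
Proof.
move=> lnz hv; have [r hr] := exists_nz _ lnz.
set L := lC l; set u := P *m Defs.AC A.
have Lr : L ord0 r != 0 by rewrite lCE fmorph_eq0.
have uE : u = (u ord0 r / L ord0 r) *: L.
  apply/rowP => k; rewrite [RHS]mxE.
  have := hv (L ord0 r *: ev k - L ord0 k *: ev r).
  rewrite dotvBr !dotvZr !dotv_e mulrC subrr => /(_ erefl).
  rewrite BBr !BZr /B -/u !dotv_e => /eqP; rewrite subr_eq0 => /eqP h.
  apply: (mulfI Lr); rewrite h; field; exact: Lr.
rewrite uE (_ : col_mx L _ = col_mx (1 : 'M_1) ((u ord0 r / L ord0 r)%:M) *m L).
  by apply: leq_trans (mxrankM_maxr _ _) (rank_leq_row _).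
by rewrite mul_col_mx mul1mx mul_scalar_mx.
Qed.

Lemma meval_ratr (g : {mpoly rat[5]}) (v : 'I_5 -> rat) :
  (map_mpoly ratr g : {mpoly algC[5]}).@[fun i => ratr (v i)] = ratr (g.@[v]).
Proof.
rewrite !mevalE (perm_big _ (msupp_map_mpoly _ (fmorph_inj _))) /= rmorph_sum.
apply: eq_bigr => m _; rewrite mcoeff_map_mpoly rmorphM rmorph_prod; congr (_ * _).
by apply: eq_bigr => i _; rewrite rmorphXn.
Qed.

Lemma cover4 (a1 a2 a3 a4 : 'I_5) : uniq [:: ord0; a1; a2; a3; a4] ->
  forall a, a != ord0 -> a = a1 \/ a = a2 \/ a = a3 \/ a = a4.
Proof.
move=> hu a ha; case: (cover5 _ _ _ _ _ hu a) => [h|]; last tauto.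
by rewrite h eqxx in ha.
Qed.

Lemma pairs_gen (y : pt) (a1 a2 a3 a4 : 'I_5) : uniq [:: ord0; a1; a2; a3; a4] ->
  (y = 0 \/ on_three_lines ord0 y) ->
  (y ord0 a2 = 0 -> y ord0 a3 = y ord0 a4 -> y ord0 a1 = 0) /\
  (y ord0 a1 = 0 -> y ord0 a2 = 0 -> y ord0 a3 = y ord0 a4).
Proof.
move=> hu [->|[_ [a [b [c [d [hu' [e1 e2]]]]]]]]; first by rewrite !mxE.
have [[h0a h0b h0c h0d _] _ _ _] := uniq5_neq _ _ _ _ _ hu'.
have ca := cover4 _ _ _ _ hu a (negbT (etrans (eq_sym _ _) h0a)).
have cb := cover4 _ _ _ _ hu b (negbT (etrans (eq_sym _ _) h0b)).
have cc := cover4 _ _ _ _ hu c (negbT (etrans (eq_sym _ _) h0c)).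
have cd := cover4 _ _ _ _ hu d (negbT (etrans (eq_sym _ _) h0d)).
rewrite /pcoord in e1 e2.
move: hu' e1 e2; clear h0a h0b h0c h0d.
case: ca => [->|[->|[->|->]]]; case: cb => [->|[->|[->|->]]];
case: cc => [->|[->|[->|->]]]; case: cd => [->|[->|[->|->]]] => hu' e1 e2;
 (split => h1 h2; [congruence | congruence]) || (move: hu'; rewrite /= !inE ?eqxx ?orbT ?orTb ?andbF //).
Qed.

Lemma crdD (u v : pt) k : (u + v) ord0 k = u ord0 k + v ord0 k.
Proof. by rewrite mxE. Qed.
Lemma crdN (u : pt) k : (- u) ord0 k = - u ord0 k.
Proof. by rewrite mxE. Qed.
Lemma crdZ a (u : pt) k : (a *: u) ord0 k = a * u ord0 k.
Proof. by rewrite mxE. Qed.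
Lemma crd0 k : (0 : pt) ord0 k = 0.
Proof. by rewrite mxE. Qed.
Definition phi4 (q : bool * bool * bool * bool) : {ffun 'I_4 -> bool} :=
  [ffun k : 'I_4 => nth false [:: q.1.1.1; q.1.1.2; q.1.2; q.2] k].

Lemma prod16 (G : {ffun 'I_4 -> bool} -> algC) :
  \prod_(e : {ffun 'I_4 -> bool}) G e =
  \prod_(a : bool) \prod_(b : bool) \prod_(c : bool) \prod_(d : bool) G (phi4 (a,b,c,d)).
Proof.
rewrite (reindex phi4); last first.
  exists (fun e : {ffun 'I_4 -> bool} => (e 0, e 1, e 2, e 3)) => e _.
    by case: e => [[[??]?]?]; rewrite /phi4 !ffunE.
  apply/ffunP => k; rewrite /phi4 ffunE; case: k => [[|[|[|[|k]]]] hk] //=.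
  all: try by congr (e _); apply: val_inj.
rewrite pair_bigA pair_bigA pair_bigA /=.
by apply: eq_bigr => [[[[a b] c] d]].
Qed.

Definition Nsym (x : pt) : algC :=
  2 * \sum_(i < 5) (x ord0 i) ^+ 2 - (\sum_(i < 5) x ord0 i) ^+ 2.

Lemma Delta_two0 (x : pt) (h : 'I_5) : h != ord0 ->
  x ord0 ord0 = 0 -> x ord0 h = 0 -> Delta' x = Nsym x ^+ 4.
Proof.
move=> hh x0 xh.
pose sn (i : nat) := sqrtC (x ord0 (inord i)).
have xE : forall i : 'I_5, x ord0 i = sn i ^+ 2.
  by move=> i; rewrite /sn sqrtCK inord_val.
have e0 : sqrtC (x ord0 ord0) = sn 0%N.
  by rewrite /sn (_ : inord 0 = ord0) //; apply: val_inj; rewrite /= inordK.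
have ek : forall k : 'I_4, sqrtC (x ord0 (lift ord0 k)) = sn k.+1.
  by move=> k; rewrite /sn; congr (sqrtC (x _ _)); apply: val_inj; rewrite /= inordK // ltnS.
rewrite /Delta' /Nsym /pcoord e0.
under eq_bigr => e _ do under eq_bigr => k _ do rewrite ek.
under [\sum_(i<5) _ ^+ 2]eq_bigr => i _ do rewrite xE.
under [\sum_(i<5) x _ _]eq_bigr => i _ do rewrite xE.
have s0 : sn 0%N = 0 by rewrite -e0 x0 sqrtC0.
have sh : sn h = 0 by rewrite /sn inord_val xh sqrtC0.
rewrite prod16 !big_bool /= !big_ord_recr !big_ord0 /= /phi4 !ffunE /=.
clear xh; move: sh hh; case: h => [[|[|[|[|[|?]]]]] hl] sh hh /=.
- by move: hh; rewrite -val_eqE.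
5: by [].
all: rewrite s0 ?sh /sgnb; ring.
Qed.

Lemma eq_from0 (a b c k : algC) : a = 0 -> k != 0 -> k * (b - c) = a -> b = c.
Proof. by move=> -> kn /eqP; rewrite mulf_eq0 (negbTE kn) subr_eq0 => /eqP. Qed.

Lemma Bexp M a b x y : B M (a *: x + b *: y) (a *: x + b *: y) =
  a ^+ 2 * B M x x + a * b * (B M x y + B M y x) + b ^+ 2 * B M y y.
Proof. rewrite !(BDl, BDr, BZl, BZr); ring. Qed.

Lemma ratN (N q : rat) : -3 * N ^+ 4 = q ^+ 2 -> N = 0.
Proof. move=> e. have h : N ^+ 4 = 0 by nra. by move/eqP: h; rewrite expf_eq0 => /eqP. Qed.
Lemma fin (a b : rat) : 4 * 1 * a + 1 ^+ 2 * (a + b) ^+ 2 = 0 -> 4 * (-1) * a + (-1) ^+ 2 * (a + b) ^+ 2 = 0 -> a = 0 /\ b = 0.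
Proof. move=> e1 e2. have ha : a = 0 by nra. split => //. rewrite ha in e1. nra. Qed.

Lemma key_main l A (P0 : pt) (h h' m n : 'I_5) (s : algC) :
  l != 0 -> A^T = A ->
  (forall x, onS l A x -> \rank (col_mx (lC l) (x *m Defs.AC A)) = 2%N) ->
  splits_over l A ->
  (forall i, exists P, tangent_at l A i P) ->
  tangent_at l A ord0 P0 ->
  uniq [:: ord0; h; h'; m; n] ->
  s != 0 -> P0 = s *: (ev m + ev n) ->
  (l ord0 h' != 0 \/ l ord0 m != 0 \/ l ord0 n != 0) -> False.
Proof.
move=> lnz Asym hrank [g [_ hg]] H3 tP0 hu sn P0E hl.
set L := lC l; set M := Defs.AC A.
have MS : M^T = M := ACsym _ Asym.
have [[n0h n0h' n0m n0n nhh'] [nhm nhn nh'm nh'n nmn] [nh0 nh'0 nm0 nn0 nh'h] [nmh nnh nmh' nnh' nnm]] := uniq5_neq _ _ _ _ _ hu.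
have P0c : forall k, P0 ord0 k = s * ((m == k)%:R + (n == k)%:R).
  by move=> k; rewrite P0E crdZ crdD !evE.
have [P0nz [LP0 QP0]] := tP0.1.
change (B M P0 P0 = 0) in QP0.
have lmn : l ord0 m + l ord0 n = 0.
  move: LP0; rewrite P0E dotvZr dotvDr !dotv_e !lCE => /eqP.
  by rewrite mulf_eq0 (negbTE sn) /= -rmorphD fmorph_eq0 => /eqP.
have [r [hr lr]] : exists r, (r = h' \/ r = m \/ r = n) /\ l ord0 r != 0.
  by case: hl => [?|[?|?]]; [exists h'|exists m|exists n]; auto.
have r0 : (r == ord0) = false by case: hr => [->|[->|->]].
have rh : (r == h) = false by case: hr => [->|[->|->]].
have Lr : L ord0 r != 0 by rewrite lCE fmorph_eq0.
have hkm : l ord0 h' != 0 \/ l ord0 m != 0.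
  case: hr => [hr|[hr|hr]]; [by left; rewrite -hr|by right; rewrite -hr|right].
  move: lmn => /eqP; rewrite addr_eq0 => /eqP ->.
  by rewrite oppr_eq0 -hr.
pose z0 := L ord0 r *: ev ord0 - L ord0 ord0 *: ev r.
have Lz0 : dotv L z0 = 0 by rewrite dotvBr !dotvZr !dotv_e mulrC subrr.
have z00 : z0 ord0 ord0 = L ord0 r by rewrite /z0 crdD crdN !crdZ !evE r0 eqxx /=; ring.
have z0h : z0 ord0 h = 0 by rewrite /z0 crdD crdN !crdZ !evE rh n0h /=; ring.
have T0 : forall w, dotv L w = 0 -> w ord0 ord0 = 0 -> B M P0 w = 0.
  by move=> w Lw w0; apply: (tangT _ _ _ _ _ _ tP0 Lz0) => //; rewrite z00.
have [P tP] := H3 h.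
pose zh := L ord0 r *: ev h - L ord0 h *: ev r.
have Lzh : dotv L zh = 0 by rewrite dotvBr !dotvZr !dotv_e mulrC subrr.
have zhh : zh ord0 h = L ord0 r by rewrite /zh crdD crdN !crdZ !evE rh eqxx /=; ring.
have Th : forall w, dotv L w = 0 -> w ord0 h = 0 -> B M P w = 0.
  by move=> w Lw w0; apply: (tangT _ _ _ _ _ _ tP Lzh) => //; rewrite zhh.
have P0h : P0 ord0 h = 0 by rewrite P0c nmh nnh /=; ring.
have BPP0 : B M P P0 = 0 := Th P0 LP0 P0h.
have BP0P : B M P0 P = 0 by rewrite Bsym.
have [[Pnz [LP QP]] tPh] := tP.
change (B M P P = 0) in QP.
have P00 : P ord0 ord0 = 0 := tP0.2 P LP BP0P.
have P0h' : P ord0 h = 0 := tPh P LP QP.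
have LPe : L ord0 h' * P ord0 h' + L ord0 m * P ord0 m + L ord0 n * P ord0 n = 0.
  by move: LP; rewrite dotvE (sum5 _ _ _ _ _ _ hu) P00 P0h' !mulr0 !add0r.
pose w := - L ord0 m *: ev h' + L ord0 h' *: ev m.
pose p := ev m + ev n.
have Lw : dotv L w = 0 by rewrite dotvDr !dotvZr !dotv_e /=; ring.
have w0 : w ord0 ord0 = 0 by rewrite /w crdD !crdZ !evE nh'0 nm0 /=; ring.
have wh : w ord0 h = 0 by rewrite /w crdD !crdZ !evE nh'h nmh /=; ring.
have BP0w := T0 w Lw w0.
have Bpw : B M p w = 0.
  by move: BP0w; rewrite P0E BZl => /eqP; rewrite mulf_eq0 (negbTE sn) => /eqP.
have Bpp : B M p p = 0.
  move: QP0; rewrite P0E BZl BZr => /eqP; rewrite !mulf_eq0 (negbTE sn) /= => /eqP //.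
have Lnm : L ord0 n = - L ord0 m.
  by apply/eqP; rewrite -addr_eq0 addrC !lCE -rmorphD lmn rmorph0.
have [be Pdec] : exists be, P = P ord0 n *: p + be *: w.
  case: (eqVneq (L ord0 h') 0) => hL.
  - have Lm : L ord0 m != 0.
      move: hL; rewrite lCE => /eqP; rewrite fmorph_eq0 => hl'.
      by case: hkm; [rewrite hl'|rewrite lCE fmorph_eq0].
    have Pmn : P ord0 m = P ord0 n.
      move: LPe; rewrite hL Lnm mul0r add0r mulNr -mulrBr => /eqP.
      by rewrite mulf_eq0 (negbTE Lm) /= subr_eq0 => /eqP.
    exists (- P ord0 h' / L ord0 m); apply/rowP => k.
    case: (cover5 _ _ _ _ _ hu k) => [->|[->|[->|[->|->]]]];
      rewrite /p /w !mxE; simpeq; rewrite -?lCE -/L /= ?P00 ?P0h' ?Pmn ?hL; field; exact: Lm.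
  - have Pk : P ord0 h' = - L ord0 m * (P ord0 m - P ord0 n) / L ord0 h'.
      apply: (eq_from0 _ _ _ _ LPe hL); rewrite Lnm; field; exact: hL.
    exists ((P ord0 m - P ord0 n) / L ord0 h'); apply/rowP => k.
    case: (cover5 _ _ _ _ _ hu k) => [->|[->|[->|[->|->]]]];
      rewrite /p /w !mxE; simpeq; rewrite -?lCE -/L /= ?P00 ?P0h' ?Pk; field; exact: hL.
have Bwp : B M w p = 0 by rewrite Bsym.
have Q2 : be ^+ 2 * B M w w = 0.
  have e := QP; rewrite Pdec Bexp Bpp Bpw Bwp in e.
  by rewrite -e /=; ring.
have onSP0 : onS l A P0 := tP0.1.
move: Q2 => /eqP; rewrite mulf_eq0 expf_eq0 /= => /orP [/eqP be0|/eqP Bww].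
-
  have Pnnz : P ord0 n != 0.
    apply/eqP => e; move/eqP: Pnz; apply; by rewrite Pdec be0 e !scale0r addr0.
  have Bpz0 : B M p z0 = 0.
    have := Th z0 Lz0 z0h; rewrite Pdec be0 scale0r addr0 BZl => /eqP.
    by rewrite mulf_eq0 (negbTE Pnnz) => /eqP.
  have allv : forall v, dotv L v = 0 -> B M P0 v = 0.
    move=> v Lv.
    have e : v = (v - (v ord0 ord0 / L ord0 r) *: z0) + (v ord0 ord0 / L ord0 r) *: z0 by rewrite subrK.
    have BP0z0 : B M P0 z0 = 0 by rewrite P0E BZl Bpz0 mulr0.
    rewrite e BDr BZr BP0z0 mulr0 addr0.
    apply: T0.
      by rewrite dotvBr dotvZr Lv Lz0 mulr0 subr0.
    rewrite crdD crdN crdZ z00; field; exact: Lr.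
  have := rank_le1 l A P0 lnz allv.
  by rewrite hrank.
have hh0 : h != ord0 by rewrite eq_sym n0h.
pose x (t : rat) : pt := p + ratr t *: w.
have x0c : forall t, x t ord0 ord0 = 0.
  by move=> t; rewrite /x /p /w !mxE; simpeq; rewrite /=; ring.
have xhc : forall t, x t ord0 h = 0.
  by move=> t; rewrite /x /p /w !mxE; simpeq; rewrite /=; ring.
have onSx : forall t, onS l A (x t).
  move=> t; split; last split.
  - apply/eqP => e; have := congr1 (fun y : pt => y ord0 n) e.
    rewrite /x /p /w !mxE; simpeq; rewrite /= !(mulr0, addr0, add0r) => /eqP; rewrite oner_eq0 //.
  - rewrite /x dotvDr dotvZr Lw mulr0 addr0 /p dotvDr !dotv_e Lnm; ring.
  - change (B M (x t) (x t) = 0).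
    rewrite (_ : x t = 1 *: p + ratr t *: w); last by rewrite scale1r.
    rewrite Bexp Bpp Bpw Bwp Bww; ring.
have Dx : forall t, Delta' (x t) = (ratr (4 * t * l ord0 m + t ^+ 2 * (l ord0 m + l ord0 h') ^+ 2)) ^+ 4.
  move=> t; rewrite (Delta_two0 (x t) h hh0 (x0c t) (xhc t)); congr (_ ^+ 4).
  rewrite /Nsym !(sum5 _ _ _ _ _ _ hu) /x /p /w !mxE; simpeq; rewrite /=.
  rewrite !(rmorphD, rmorphM, rmorphXn, rmorphN, rmorph_nat, rmorph1) /=; ring.
have gx : forall t, (map_mpoly ratr g : {mpoly algC[5]}).@[pcoord (x t)] =
   ratr (g.@[fun i => ((i == m)%:R + (i == n)%:R) + t * (- l ord0 m * (i == h')%:R + l ord0 h' * (i == m)%:R)]).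
  move=> t; rewrite -meval_ratr; apply: meval_eq => i.
  rewrite /pcoord /x /p /w !mxE /= !(rmorphD, rmorphM, rmorphN, rmorph_nat) /=; ring.
have Nz : forall t, 4 * t * l ord0 m + t ^+ 2 * (l ord0 m + l ord0 h') ^+ 2 = 0.
  move=> t; have := hg (x t) (onSx t); rewrite Dx gx.
  rewrite -!rmorphXn (_ : -3 = ratr (-3 : rat)); last by rewrite rmorphN rmorph_nat.
  rewrite -rmorphM => /fmorph_inj.
  by move=> e; rewrite rmorphXn in e; apply: (ratN _ _ e).
have [lm0 lh0] := fin _ _ (Nz 1) (Nz (-1)).
by case: hkm; rewrite ?lm0 ?lh0 eqxx.
Qed.

Lemma eq_from_eq (x y b c k : algC) : x = y -> k != 0 -> k * (b - c) = x - y -> b = c.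
Proof. move=> -> kn; rewrite subrr; exact: eq_from0. Qed.

Lemma neg2 : (-2 : algC) != 0.
Proof. by rewrite oppr_eq0 pnatr_eq0. Qed.

Lemma key_deg l A (P0 : pt) (h h' m n : 'I_5) (s : algC) :
  l != 0 -> A^T = A ->
  (forall x, onS l A x -> \rank (col_mx (lC l) (x *m Defs.AC A)) = 2%N) ->
  (forall (i : 'I_5) (P : pt), tangent_at l A i P -> on_three_lines i P) ->
  tangent_at l A ord0 P0 ->
  uniq [:: ord0; h; h'; m; n] ->
  s != 0 -> P0 = s *: (ev m + ev n) ->
  l ord0 h = 0 -> l ord0 h' = 0 -> l ord0 m = 0 -> l ord0 n = 0 -> False.
Proof.
move=> lnz Asym hrank H4 tP0 hu sn P0E lh lh' lm ln.
set L := lC l; set M := Defs.AC A.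
have MS : M^T = M := ACsym _ Asym.
have [[n0h n0h' n0m n0n nhh'] [nhm nhn nh'm nh'n nmn] [nh0 nh'0 nm0 nn0 nh'h] [nmh nnh nmh' nnh' nnm]] := uniq5_neq _ _ _ _ _ hu.
have l0 : l ord0 ord0 != 0.
  apply/eqP => l00; move/eqP: lnz; apply; apply/rowP => k; rewrite [RHS]mxE.
  by case: (cover5 _ _ _ _ _ hu k) => [->|[->|[->|[->|->]]]].
have L0 : L ord0 ord0 != 0 by rewrite lCE fmorph_eq0.
have Ldot : forall v, dotv L v = L ord0 ord0 * v ord0 ord0.
  move=> v; rewrite dotvE (sum5 _ _ _ _ _ _ hu) !lCE lh lh' lm ln rmorph0; ring.
have tang0 : forall y, onS l A y -> tangent_at l A ord0 y.
  move=> y hy; split => // v Lv _; move: Lv; rewrite Ldot => /eqP.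
  by rewrite mulf_eq0 (negbTE L0) => /eqP.
have [P0nz [LP0 QP0]] := tP0.1.
change (B M P0 P0 = 0) in QP0.
have yfact : forall w : pt, w ord0 ord0 = 0 ->
   (B M w w *: P0 + (- (2 * B M P0 w)) *: w = 0 \/
    on_three_lines ord0 (B M w w *: P0 + (- (2 * B M P0 w)) *: w)).
  move=> w w0; set y := (X in X = 0 \/ _).
  case: (eqVneq y 0) => [->|ynz]; [by left| right].
  apply: H4; apply: tang0; split => //; split.
    by rewrite /y dotvDr !dotvZr LP0 (Ldot w) w0; ring.
  change (B M y y = 0); rewrite /y Bexp QP0 (Bsym _ w P0 MS); ring.
have Bh : forall a1 a2, uniq [:: ord0; a1; a2; m; n] -> B M P0 (ev a1) = 0.
  move=> a1 a2 hu2.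
  have [[n0a1 n0a2 _ _ na1a2] [na1m na1n na2m na2n _] [na10 na20 _ _ na2a1] [nma1 nna1 nma2 nna2 _]] := uniq5_neq _ _ _ _ _ hu2.
  have e1 : ev a1 ord0 ord0 = 0 by rewrite evE na10.
  have [H _] := pairs_gen _ _ _ _ _ hu2 (yfact (ev a1) e1).
  move: H; set b := B M P0 (ev a1); set c := B M (ev a1) (ev a1).
  rewrite P0E !mxE; simpeq; rewrite /= => H.
  have e := H ltac:(ring) ltac:(ring).
  by apply: (eq_from0 _ _ _ _ e neg2); ring.
have B1 := Bh h h' hu.
have hu2 : uniq [:: ord0; h'; h; m; n] by rewrite /= !inE; simpeq.
have B2 := Bh h' h hu2.
have B3 : B M P0 (ev m) = 0.
  have e1 : ev m ord0 ord0 = 0 by rewrite evE nm0.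
  have [_ H] := pairs_gen _ _ _ _ _ hu (yfact (ev m) e1).
  move: H; set b := B M P0 (ev m); set c := B M (ev m) (ev m).
  rewrite P0E !mxE; simpeq; rewrite /= => H.
  have e := H ltac:(ring) ltac:(ring).
  by apply: (eq_from_eq _ _ _ _ _ e neg2); ring.
have B4 : B M P0 (ev n) = 0.
  move: QP0; rewrite {2}P0E BZr BDr B3 add0r => /eqP; rewrite mulf_eq0 (negbTE sn) => /eqP //.
have allv : forall v, dotv L v = 0 -> B M P0 v = 0.
  move=> v Lv.
  have v0 : v ord0 ord0 = 0 by move: Lv; rewrite Ldot => /eqP; rewrite mulf_eq0 (negbTE L0) => /eqP.
  have -> : v = v ord0 h *: ev h + v ord0 h' *: ev h' + v ord0 m *: ev m + v ord0 n *: ev n.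
    apply/rowP => k; rewrite [RHS]mxE.
    case: (cover5 _ _ _ _ _ hu k) => [->|[->|[->|[->|->]]]]; rewrite !mxE; simpeq; rewrite /= ?v0; ring.
  by rewrite !(BDr, BZr) B1 B2 B3 B4; ring.
have := rank_le1 l A P0 lnz allv.
by rewrite hrank.
Qed.

Lemma reduce l A (P0 : pt) (h h' m n : 'I_5) :
  l != 0 -> A^T = A ->
  (forall x, onS l A x -> \rank (col_mx (lC l) (x *m Defs.AC A)) = 2%N) ->
  splits_over l A ->
  (forall i, exists P, tangent_at l A i P) ->
  (forall (i : 'I_5) (P : pt), tangent_at l A i P -> on_three_lines i P) ->
  tangent_at l A ord0 P0 ->
  uniq [:: ord0; h; h'; m; n] ->
  P0 ord0 ord0 = 0 -> P0 ord0 h = 0 -> P0 ord0 h' = 0 -> P0 ord0 m = P0 ord0 n -> False.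
Proof.
move=> lnz Asym hrank hsp H3 H4 tP0 hu p0 ph ph' pmn.
have [[n0h n0h' n0m n0n nhh'] [nhm nhn nh'm nh'n nmn] [nh0 nh'0 nm0 nn0 nh'h] [nmh nnh nmh' nnh' nnm]] := uniq5_neq _ _ _ _ _ hu.
have P0E : P0 = P0 ord0 n *: (ev m + ev n).
  apply/rowP => k; rewrite [RHS]mxE.
  case: (cover5 _ _ _ _ _ hu k) => [->|[->|[->|[->|->]]]]; rewrite !mxE; simpeq;
    rewrite /= ?p0 ?ph ?ph' ?pmn; ring.
have sn : P0 ord0 n != 0.
  apply/eqP => e; have [[nz _] _] := tP0; move/eqP: nz; apply.
  by rewrite P0E e scale0r.
have hu2 : uniq [:: ord0; h'; h; m; n] by rewrite /= !inE; simpeq.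
case: (eqVneq (l ord0 h') 0) => lh'; last first.
  exact: (key_main l A P0 h h' m n _ lnz Asym hrank hsp H3 tP0 hu sn P0E (or_introl lh')).
case: (eqVneq (l ord0 m) 0) => lm; last first.
  exact: (key_main l A P0 h h' m n _ lnz Asym hrank hsp H3 tP0 hu sn P0E (or_intror (or_introl lm))).
case: (eqVneq (l ord0 n) 0) => ln; last first.
  exact: (key_main l A P0 h h' m n _ lnz Asym hrank hsp H3 tP0 hu sn P0E (or_intror (or_intror ln))).
case: (eqVneq (l ord0 h) 0) => lh; last first.
  exact: (key_main l A P0 h' h m n _ lnz Asym hrank hsp H3 tP0 hu2 sn P0E (or_introl lh)).
exact: (key_deg l A P0 h h' m n _ lnz Asym hrank H4 tP0 hu sn P0E lh lh' lm ln).
Qed.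

Theorem mainTheorem16 (l : 'rV[rat]_5) (A : 'M[rat]_5) :
  smooth_quadric_surface l A ->
  splits_over l A ->
  (forall i : 'I_5, exists P : pt, tangent_at l A i P) ->
  (forall (i : 'I_5) (P : pt), tangent_at l A i P -> on_three_lines i P) ->
  forall P0 : pt, tangent_at l A ord0 P0 ->
  forall j : 'I_5, j != ord0 -> pcoord P0 j != 0.
Proof.
move=> [lnz [Asym hrank]] hsp H3 H4 P0 tP0 j jn0.
apply/negP => /eqP Pj; rewrite /pcoord in Pj.
have [p0 [a [b [c [d [hu [eab ecd]]]]]]] := H4 _ _ tP0.
rewrite /pcoord in p0 eab ecd.
have [[n0a n0b n0c n0d nab] [nac nad nbc nbd ncd] [na0 nb0 nc0 nd0 nba] [nca nda ncb ndb ndc]] := uniq5_neq _ _ _ _ _ hu.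
have R := reduce l A P0 _ _ _ _ lnz Asym hrank hsp H3 H4 tP0.
case: (cover4 _ _ _ _ hu j jn0) => [ja|[jb|[jc|jd]]]; subst j.
- exact: (R a b c d hu p0 Pj (etrans (esym eab) Pj) ecd).
- have hu' : uniq [:: ord0; b; a; c; d] by rewrite /= !inE; simpeq.
  exact: (R b a c d hu' p0 Pj (etrans eab Pj) ecd).
- have hu' : uniq [:: ord0; c; d; a; b] by rewrite /= !inE; simpeq.
  exact: (R c d a b hu' p0 Pj (etrans (esym ecd) Pj) eab).
- have hu' : uniq [:: ord0; d; c; a; b] by rewrite /= !inE; simpeq.
  exact: (R d c a b hu' p0 Pj (etrans ecd Pj) eab).
Qed.
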